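(* Let $(p_{nm})_{n,m\in\{0,1,2\}}$ be a probability distribution on $\mathbb{Z}_3\times\mathbb{Z}_3$ and define $L_1=p_{00}+p_{10}+p_{20}$, $L_2=p_{00}+p_{01}+p_{02}$, $L_3=p_{00}+p_{11}+p_{22}$, $L_4=p_{00}+p_{12}+p_{21}$. If $p_{00}>1/3$, then $L_{\max}:=\max\{L_1,L_2,L_3,L_4\}>1/2$.
   Context: The $p_{nm}$ are the Bell-diagonal probabilities of a two-qutrit state; $L_1,\dots,L_4$ are the weights associated with the four mutually unbiased bases (the four lines through the origin of $\mathbb{Z}_3\times\mathbb{Z}_3$). *)

(* Defs.v *)
From mathcomp Require Import all_boot all_order all_algebra.
Set Implicit Arguments. Unset Strict Implicit. Unset Printing Implicit Defensive.
Import Order.TTheory GRing.Theory Num.Theory.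
Local Open Scope ring_scope.

Definition is_prob (R : realFieldType) (p : 'I_3 -> 'I_3 -> R) : Prop :=
  (forall n m, 0 <= p n m) /\ \sum_(n < 3) \sum_(m < 3) p n m = 1.

Definition o3 (k : nat) : 'I_3 := inord k.

Section L.
Variables (R : realFieldType) (p : 'I_3 -> 'I_3 -> R).
Let P (n m : nat) := p (o3 n) (o3 m).
Definition L1 := P 0 0 + P 1 0 + P 2 0.
Definition L2 := P 0 0 + P 0 1 + P 0 2.
Definition L3 := P 0 0 + P 1 1 + P 2 2.
Definition L4 := P 0 0 + P 1 2 + P 2 1.
Definition Lmax := Num.max (Num.max L1 L2) (Num.max L3 L4).
End L.

(* Main.v *)
Require Import Defs.
From mathcomp Require Import all_boot all_order all_algebra.
From mathcomp Require Import ring lra.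
Import Order.TTheory GRing.Theory Num.Theory.
Local Open Scope ring_scope.

Theorem lemma4 (R : realFieldType) (p : 'I_3 -> 'I_3 -> R) :
  is_prob p -> 1 / 3 < p (o3 0) (o3 0) -> 1 / 2 < Lmax p.
Proof.
move=> [h0 hs] hp.
have E : forall i : 'I_3, i = o3 i by move=> i; rewrite /o3 inord_val.
have hs' : \sum_(n < 3) \sum_(m < 3) p (o3 n) (o3 m) = 1.
  by rewrite -hs; apply: eq_bigr => n _; apply: eq_bigr => m _; rewrite -!E.
move: hs'; rewrite !big_ord_recr !big_ord0 /= => hs'.
have a1 : L1 p <= Lmax p by rewrite /Lmax !le_max lexx.
have a2 : L2 p <= Lmax p by rewrite /Lmax !le_max lexx !orbT.
have a3 : L3 p <= Lmax p by rewrite /Lmax !le_max lexx !orbT.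
have a4 : L4 p <= Lmax p by rewrite /Lmax !le_max lexx !orbT.
move: a1 a2 a3 a4; rewrite /L1 /L2 /L3 /L4 => a1 a2 a3 a4.
lra.
Qed.
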